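(* Let $N,l$ be positive integers with $l<N$, and let $\hat a(\xi)=\cos^{2N}(\xi/2)\sum_{j=0}^{l}\binom{N-1+j}{j}\sin^{2j}(\xi/2)$ be the mask of the pseudo spline of type II of order $(N,l)$. Then for all $\xi\in\mathbb R$, $$|\hat a(\xi)|\ge 1-C_1|\xi|^{2l+2},\qquad C_1=\frac{\sum_{j=l+1}^{N+l}\binom{N+l}{j}}{2^{2l+2}}.$$ *)

(* Defs.v *)
From Stdlib Require Import Reals Lra Lia.
Open Scope R_scope.

Definition pseudo_mask_II (N l : nat) (xi : R) : R :=
  (cos (xi / 2)) ^ (2 * N) *
  sum_f_R0 (fun j => C (N - 1 + j) j * (sin (xi / 2)) ^ (2 * j)) l.

(* C1 = (sum_{j=l+1}^{N+l} C(N+l, j)) / 2^(2l+2);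
   the sum is reindexed as j = l+1+i, i = 0 .. N-1. *)
Definition C1_const (N l : nat) : R :=
  sum_f_R0 (fun i => C (N + l) (l + 1 + i)) (N - 1) / 2 ^ (2 * l + 2).

(* Main.v *)
Require Import Defs.
From Stdlib Require Import Reals Lra Lia.
Open Scope R_scope.

Lemma C_ge0 n k : 0 <= C n k.
Proof.
  unfold C. apply Rlt_le. apply Rdiv_lt_0_compat. apply INR_fact_lt_0.
  apply Rmult_lt_0_compat; apply INR_fact_lt_0.
Qed.

Lemma C_n0 n : C n 0 = 1.
Proof. unfold C. rewrite Nat.sub_0_r. simpl. field. apply not_0_INR, Factorial.fact_neq_0. Qed.

Lemma scal_sum' (An : nat -> R) (N : nat) (a : R) :
  sum_f_R0 (fun i => a * An i) N = a * sum_f_R0 An N.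
Proof. rewrite scal_sum. apply sum_eq. intros; ring. Qed.

Lemma ident (N m : nat) (x y : R) (hN : (1 <= N)%nat) (hxy : x + y = 1) :
  x ^ N * sum_f_R0 (fun j => C (N - 1 + j) j * y ^ j) m
  = sum_f_R0 (fun j => C (N + m) j * y ^ j * x ^ (N + m - j)) m.
Proof.
  induction m as [|m IH].
  - simpl. rewrite !C_n0. replace (N + 0 - 0)%nat with N by lia. ring.
  - rewrite tech5, Rmult_plus_distr_l, IH.
    remember (N + m)%nat as nn eqn:Hnn.
    replace (N - 1 + S m)%nat with nn by (lia).
    replace (N + S m)%nat with (S nn) by (lia).
    rewrite (decomp_sum (fun j => C (S nn) j * y ^ j * x ^ (S nn - j)) (S m)) by lia. simpl pred.
    rewrite (sum_eq (fun i => C (S nn) (S i) * y ^ (S i) * x ^ (S nn - S i)) (fun i => y * (C nn i * y ^ i * x ^ (nn - i))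
        + x * (C nn (S i) * y ^ S i * x ^ (nn - S i)))).
    2:{ intros i Hi. cbv beta. rewrite <- pascal by (lia).
        replace (S nn - S i)%nat with (S (nn - S i)) by (lia).
        replace (nn - i)%nat with (S (nn - S i)) by (lia).
        simpl. ring. }
    rewrite plus_sum.
    rewrite !scal_sum'.
    assert (H := tech5 (fun j => C nn j * y ^ j * x ^ (nn - j)) m).
    rewrite (decomp_sum _ (S m)) in H by lia. simpl pred in H.
    replace (nn - S m)%nat with (N-1)%nat in H by lia.
    assert (HxN: x^N = x * x^(N-1)) by (replace N with (S (N-1)) at 1 by lia; reflexivity).
    rewrite !C_n0, !Nat.sub_0_r in *.
    change (x ^ S nn) with (x * x ^ nn).
    rewrite HxN.
    generalize dependent (sum_f_R0 (fun j : nat => C nn j * y ^ j * x ^ (nn - j)) m).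
    generalize dependent (sum_f_R0 (fun i : nat => C nn (S i) * y ^ S i * x ^ (nn - S i)) m).
    intros B G _ H.
    replace B with (G + C nn (S m) * y ^ S m * x ^ (N - 1) - x ^ nn) by (rewrite pow_O in H; lra).
    generalize (C nn (S m)) (y ^ S m) (x ^ (N-1)) (x ^ nn). intros c Y Z X.
    replace y with (1 - x) by lra. simpl. ring.
Qed.

Lemma sin_sq_le u : sin u ^ 2 <= u ^ 2.
Proof.
  pose proof (SIN_bound u). pose proof PI2_1.
  destruct (Rle_lt_dec 1 (Rabs u)) as [H1|H1].
  - rewrite <- (pow2_abs u). nra.
  - destruct (Rtotal_order u 0) as [Hu|[Hu|Hu]].
    + pose proof (sin_lt_x (-u) ltac:(lra)). pose proof (sin_ge_0 (-u) ltac:(lra) ltac:(rewrite Rabs_left in H1; lra)).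
      rewrite sin_neg in *. nra.
    + subst. rewrite sin_0. lra.
    + pose proof (sin_lt_x u Hu). pose proof (sin_ge_0 u ltac:(lra) ltac:(rewrite Rabs_right in H1; lra)). nra.
Qed.

Lemma pow_le1 a k : 0 <= a <= 1 -> 0 <= a ^ k <= 1.
Proof. intros H. split. apply pow_le; lra. rewrite <- (pow1 k). apply pow_incr; lra. Qed.

Theorem mainTheorem3 (N l : nat) (hl : (0 < l)%nat) (hlN : (l < N)%nat) :
  forall xi : R,
    Rabs (pseudo_mask_II N l xi) >= 1 - C1_const N l * Rabs xi ^ (2 * l + 2).
Proof.
  intros xi.
  pose proof (sin2_cos2 (xi/2)) as Hsc. unfold Rsqr in Hsc.
  pose proof (sin_sq_le (xi/2)) as Hsl.
  assert (Hm: pseudo_mask_II N l xi = sum_f_R0 (fun j => C (N+l) j * (sin(xi/2)^2)^j * (cos(xi/2)^2)^(N+l-j)) l).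
  { unfold pseudo_mask_II. rewrite pow_mult.
    rewrite (sum_eq _ (fun j => C (N-1+j) j * (sin(xi/2)^2)^j)).
    apply ident; [lia| simpl; lra]. intros; rewrite pow_mult; reflexivity. }
  assert (Hy0 : 0 <= sin (xi/2) ^ 2) by apply pow2_ge_0.
  assert (Hx0 : 0 <= cos (xi/2) ^ 2) by apply pow2_ge_0.
  assert (Hxy : cos (xi/2) ^ 2 + sin (xi/2) ^ 2 = 1) by (simpl; lra).
  generalize dependent (sin (xi/2) ^ 2). generalize dependent (cos (xi/2) ^ 2).
  intros x Hx0 y Hsl Hm Hy0 Hxy.
  assert (Hb: 1 = sum_f_R0 (fun i => C (N+l) i * y^i * x^(N+l-i)) (N+l)).
  { rewrite <- binomial. replace (y+x) with 1 by lra. symmetry; apply pow1. }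
  rewrite (tech2 _ l (N+l)) in Hb by lia. cbv beta in Hb.
  replace (N + l - S l)%nat with (N-1)%nat in Hb by lia.
  pose (S0 := sum_f_R0 (fun i => C (N + l) (l + 1 + i)) (N - 1)).
  assert (HT: sum_f_R0 (fun i => C (N+l) (S l + i) * y^(S l + i) * x^(N+l-(S l + i))) (N-1)
              <= y ^ (l+1) * S0).
  { unfold S0. rewrite <- scal_sum'. apply sum_Rle. intros i Hi.
    replace (S l + i)%nat with (l + 1 + i)%nat by lia.
    rewrite pow_add.
    pose proof (C_ge0 (N+l) (l+1+i)).
    pose proof (pow_le1 y i ltac:(lra)). pose proof (pow_le1 x (N + l - (l + 1 + i)) ltac:(lra)).
    pose proof (pow_le y (l+1) Hy0).
    generalize (C (N + l) (l + 1 + i)) (y ^ (l+1)) (y ^ i) (x ^ (N + l - (l + 1 + i))) H H0 H1 H2.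
    intros c Y a b Hc Ha Hb' HY. assert (0 <= Y * c) by nra. assert (a * b <= 1) by nra. nra. }
  assert (HS0 : 0 <= S0).
  { unfold S0. apply cond_pos_sum. intros; apply C_ge0. }
  assert (Hyl : y ^ (l+1) <= Rabs xi ^ (2*l+2) / 2 ^ (2*l+2)).
  { assert (y <= (Rabs xi / 2) ^ 2).
    { replace ((Rabs xi / 2) ^ 2) with ((xi / 2) ^ 2). exact Hsl.
      unfold Rdiv. rewrite !Rpow_mult_distr, pow2_abs. reflexivity. }
    assert (0 <= y <= (Rabs xi / 2) ^ 2) by lra. clear H. rename H0 into H.
    apply (pow_incr _ _ (l+1)) in H.
    rewrite <- pow_mult in H. replace (2 * (l+1))%nat with (2*l+2)%nat in H by lia.
    unfold Rdiv in H. rewrite Rpow_mult_distr, pow_inv in H. exact H. }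
  unfold C1_const. fold S0.
  assert (Hm2 : pseudo_mask_II N l xi = 1 - sum_f_R0 (fun i => C (N+l) (S l + i) * y^(S l + i) * x^(N+l-(S l + i))) (N-1)) by lra.
  apply Rle_ge. eapply Rle_trans; [|apply Rle_abs]. rewrite Hm2.
  assert (S0 * y ^ (l+1) <= S0 * (Rabs xi ^ (2*l+2) / 2 ^ (2*l+2))) by (apply Rmult_le_compat_l; lra).
  assert (S0 / 2 ^ (2*l+2) * Rabs xi ^ (2*l+2) = S0 * (Rabs xi ^ (2*l+2) / 2 ^ (2*l+2))).
  { field. apply pow_nonzero. lra. }
  lra.
Qed.
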